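(* If $M$ and $N$ are positive integers with $N\ge M$, then there exists an equal norm integer frame with $N$ elements in $\mathcal{H}_M$, i.e. an $M\times N$ integer matrix of rank $M$ all of whose columns have the same Euclidean norm.
   Context: $\mathcal{H}_M$ is the real $M$-dimensional Hilbert space, identified with $\mathbb{R}^M$ via a fixed orthonormal basis; an integer frame is a frame (spanning family) whose vectors have integer coordinates with respect to this basis. *)

(* Defs.v *)
From mathcomp Require Import all_boot all_order all_algebra.
Set Implicit Arguments. Unset Strict Implicit. Unset Printing Implicit Defensive.
Import Order.TTheory GRing.Theory Num.Theory.
Local Open Scope ring_scope.

Definition col_sqnorm (M N : nat) (A : 'M[int]_(M, N)) (j : 'I_N) : int :=
  \sum_(i < M) A i j ^+ 2.

(* The columns of A form a frame of H_M = R^M: A has rank M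
   (rank computed over Q, which equals the rank over R). *)
Definition int_frame (M N : nat) (A : 'M[int]_(M, N)) : Prop :=
  \rank (map_mx (fun z : int => z%:~R : rat) A) = M.

Definition equal_norm (M N : nat) (A : 'M[int]_(M, N)) : Prop :=
  forall j k : 'I_N, col_sqnorm A j = col_sqnorm A k.

(* Main.v *)
Require Import Defs.
From mathcomp Require Import all_boot all_order all_algebra.
Set Implicit Arguments. Unset Strict Implicit. Unset Printing Implicit Defensive.
Import Order.TTheory GRing.Theory Num.Theory.
Local Open Scope ring_scope.

Lemma sum_ind (R : nzRingType) n (m : 'I_n) :
  \sum_(i < n) (((i : nat) == (m : nat))%:R : R) = 1.
Proof.
rewrite (bigD1 m) //= eqxx big1 ?addr0 // => i /negbTE.
by rewrite -val_eqE /= => ->.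
Qed.

Theorem theorem7p1 (M N : nat) :
  (0 < M)%N -> (M <= N)%N ->
  exists A : 'M[int]_(M, N), int_frame A /\ equal_norm A.
Proof.
move=> M0 MN.
pose A : 'M[int]_(M, N) := \matrix_(i, j) ((i : nat) == (j %% M)%N)%:R.
have colE : forall j : 'I_N, col_sqnorm A j = 1.
  move=> j; rewrite /col_sqnorm.
  have jm : (j %% M < M)%N by rewrite ltn_pmod.
  rewrite -(sum_ind _ (Ordinal jm)); apply: eq_bigr => i _.
  by rewrite mxE /=; case: eqP; rewrite ?expr0n ?expr1n.
exists A; split; last by move=> j k; rewrite !colE.
rewrite /int_frame.
set Aq := map_mx _ A.
pose P : 'M[rat]_(N, M) := \matrix_(j, k) ((j : nat) == k)%:R.
have AP : Aq *m P = 1%:M.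
  apply/matrixP => i k; rewrite !mxE.
  have kN : (k < N)%N by apply: leq_trans (ltn_ord k) MN.
  rewrite (bigD1 (Ordinal kN)) //= big1.
    rewrite !mxE /= eqxx mulr1 addr0 modn_small //.
    by rewrite -val_eqE /=; case: (_ == _).
  move=> j /negbTE; rewrite -val_eqE /= !mxE => ->; by rewrite mulr0.
apply/eqP; rewrite eqn_leq rank_leq_row andTb.
have := mxrankM_maxl Aq P; rewrite AP mxrank1; exact.
Qed.
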